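(* In the contention game with $k=3$ channels under acknowledgement-based feedback and $n\in\{2,3,4,5\}$ players, the anonymous protocol $f^3$ (in every slot, regardless of history, a pending player transmits on each of the three channels with probability $1/3$ and never stays idle) is an equilibrium protocol, with expected latency of each player equal to $3/2$, $15/8$, $189/80$ and $597/200$ for $n=2,3,4,5$ respectively.
   Context: Contention game: $n$ players, channel set $K=\{1,\dots,k\}$, discrete slots $t=1,2,\dots$; each player has one packet and is initially pending. In each slot a pending player chooses (possibly at random) an action in $\{0,1,\dots,k\}$ ($0$ = no transmission, $a$ = transmit on channel $a$). A lone transmitter on a channel succeeds and leaves; two or more transmitters on a channel collide and remain pending. Latency $T_i$ = slot of player $i$'s successful transmission; players minimize expected latency. Acknowledgement-based feedback: only a player who attempted transmission learns whether she succeeded; decision rules depend only on the personal action history. A protocol is a sequence of such decision rules; an anonymous protocol is used by all players and does not depend on identity. It is an equilibrium protocol if, when all players use it, no player at any slot and after any history can decrease her conditional expected latency by unilaterally deviating. *)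

(* Defs.v *)
From HB Require Import structures.
From mathcomp Require Import all_boot all_order all_algebra.
From mathcomp Require Import all_classical all_reals.
From mathcomp Require Import ereal topology normedtype sequences.
Set Implicit Arguments. Unset Strict Implicit. Unset Printing Implicit Defensive.
Import Order.TTheory GRing.Theory Num.Theory.
Local Open Scope ring_scope.

(** Contention game with k = 3 channels, n players (indexed by 'I_n),
    acknowledgement-based feedback.
    Actions: 'I_4, where 0 = stay idle and a = 1,2,3 = transmit on channel a. *)

Section Game.
Variable R : realType.

Definition action := 'I_4.

(** A (randomized) decision rule sequence, i.e. a protocol/strategy for one
    player: it maps the player's personal action history (the sequence of her
    own past actions; under acknowledgement-based feedback, as long as she is
    pending, every past transmission failed and an idle slot gives no
    information, so the personal history is exactly this sequence) to a
    probability distribution over actions. *)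
Definition strategy := seq action -> action -> R.

Definition valid_strategy (sigma : strategy) : Prop :=
  (forall h a, 0 <= sigma h a) /\ (forall h, \sum_(a : action) sigma h a = 1).

Definition f3dist (a : action) : R := if a == ord0 then 0 else 3%:R^-1.

Definition f3 : strategy := fun _ a => f3dist a.

Variable n : nat.

(** Players succeeding under an action profile [x] (non-pending players are
    given action 0): a lone transmitter on a channel succeeds. *)
Definition succ (x : {ffun 'I_n -> action}) : {set 'I_n} :=
  [set j | (x j != ord0) && [forall j', (j' != j) ==> (x j' != x j)]].

Variable i : 'I_n. (* the player under consideration (possible deviator) *)

Definition prof_w (S : {set 'I_n}) (a : action) (x : {ffun 'I_n -> action}) : R :=
  \prod_(j : 'I_n)
     (if j == i then (x j == a)%:R
      else if j \in S then f3dist (x j) else (x j == ord0)%:R).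

(** One slot: from a (sub-probability) weight on pending sets to the weight on
    the next pending sets, restricted to outcomes where player [i] is still
    pending. *)
Definition step (d : {set 'I_n} -> R) (a : action) : {set 'I_n} -> R :=
  fun S' => \sum_(S : {set 'I_n}) d S *
     \sum_(x : {ffun 'I_n -> action})
        prof_w S a x * ((S :\: succ x == S') && (i \in S'))%:R.

Definition init_state : {set 'I_n} -> R := fun S => (S == [set: 'I_n]%SET)%:R.

(** [reach h S] = probability that, when player i's own actions are the
    sequence [h] and all other players use f^3, player i is still pending
    after [size h] slots and the set of pending players is [S]. *)
Definition reach (h : seq action) : {set 'I_n} -> R := foldl step init_state h.

(** Probability (likelihood, up to the factor due to i's own randomization)
    of the personal history [h]. *)
Definition mass (h : seq action) : R := \sum_(S : {set 'I_n}) reach h S.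

Fixpoint stratprob (sigma : strategy) (h : seq action) (s : seq action) : R :=
  match s with
  | [::] => 1
  | a :: s' => sigma h a * stratprob sigma (rcons h a) s'
  end.

(** Conditional probability, given personal history [h] (player i pending at
    slot size h + 1), that player i is still pending after [u] further slots
    when she continues with [sigma] and the others use f^3. *)
Definition surv (sigma : strategy) (h : seq action) (u : nat) : R :=
  (\sum_(s : u.-tuple action) stratprob sigma h s * mass (h ++ s)) / mass h.

(** Conditional expected latency E[T_i | h] = size h + sum_{u>=0} P(T_i > size h + u | h),
    an extended real (may be +oo). *)
Definition exp_latency (sigma : strategy) (h : seq action) : \bar R :=
  ((size h)%:R)%:E + (\sum_(0 <= u <oo) (surv sigma h u)%:E)%E.

End Game.

Definition f3_equilibrium (R : realType) (n : nat) : Prop :=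
  forall (i : 'I_n) (h : seq action) (sigma : strategy R),
    valid_strategy sigma -> 0 < @mass R n i h ->
    (@exp_latency R n i (f3 R) h <= @exp_latency R n i sigma h)%E.

Definition lat_value (R : realType) (n : nat) : R :=
  match n with
  | 2 => 3%:R / 2%:R
  | 3 => 15%:R / 8%:R
  | 4 => 189%:R / 80%:R
  | _ => 597%:R / 200%:R
  end.

(* Main.v *)
Require Import Defs.
From HB Require Import structures.
From mathcomp Require Import all_boot all_order all_algebra.
From mathcomp Require Import all_classical all_reals.
From mathcomp Require Import ereal topology normedtype sequences.
From mathcomp Require Import ring lra.
Import Order.TTheory GRing.Theory Num.Theory.
Set Implicit Arguments. Unset Strict Implicit. Unset Printing Implicit Defensive.
Local Open Scope nat_scope.

Fixpoint allL (n k : nat) : seq (seq nat) :=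
  if n is n'.+1 then [seq c :: l | c <- iota 0 k, l <- allL n' k] else [:: [::]].
Fixpoint allB (n : nat) : seq (seq bool) :=
  if n is n'.+1 then [seq c :: l | c <- [:: true; false], l <- allB n'] else [:: [::]].

Lemma mem_allL n k l : (l \in allL n k) = (size l == n) && all (fun c => c < k) l.
Proof.
elim: n l => [|n IH] [|c l] //=.
- apply/negbTE/allpairsP => -[[x y] /= [_ _]] //.
- apply/allpairsP/andP => [[[x y] /= [hx hy [-> ->]]]|[hs /andP[hc ha]]].
    move: hy; rewrite IH => /andP[/eqP -> ->]; rewrite mem_iota /= in hx.
    by rewrite add0n in hx; rewrite hx.
  exists (c, l) => /=; split=> //; first by rewrite mem_iota.
  by rewrite IH ha andbT.
Qed.

Lemma uniq_allL n k : uniq (allL n k).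
Proof.
elim: n => [|n IH] //=.
apply: allpairs_uniq => //; first exact: iota_uniq.
by move=> [x1 y1] [x2 y2] _ _ /= [-> ->].
Qed.

Lemma mem_allB n bl : size bl = n -> bl \in allB n.
Proof.
elim: n bl => [|n IH] [|b bl] // [hs].
apply/allpairsP; exists (b, bl) => /=; split=> //; first by case: b.
exact: IH.
Qed.

Lemma card_count n (A : {set 'I_n}) (P : pred nat) :
  (forall j : 'I_n, (j \in A) = P j) -> #|A| = count P (iota 0 n).
Proof.
move=> H; rewrite -val_enum_ord count_map cardE /enum_mem size_filter.
rewrite filter_predT; apply: eq_count => j /=; by rewrite H.
Qed.

Section Dec.
Variable n : nat.
Definition decL (l : seq nat) : {ffun 'I_n -> 'I_4} := [ffun j : 'I_n => inord (nth 0 l j)].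
Definition encL (x : {ffun 'I_n -> 'I_4}) : seq nat := [seq val (x j) | j <- enum 'I_n].

Lemma nth_lt4 l (j : nat) : l \in allL n 4 -> nth 0 l j < 4.
Proof.
rewrite mem_allL => /andP[_ /allP H].
by case: (ltnP j (size l)) => hj; [apply: H; apply: mem_nth | rewrite nth_default].
Qed.

Lemma val_decL l (j : 'I_n) : l \in allL n 4 -> val (decL l j) = nth 0 l j.
Proof. by move=> hl; rewrite ffunE /= inordK // nth_lt4. Qed.

Lemma encLK x : decL (encL x) = x.
Proof.
apply/ffunP => j; rewrite ffunE /encL (nth_map j) ?size_enum_ord //.
by rewrite nth_ord_enum; exact: (inord_val (x j)).
Qed.

Lemma encL_mem x : encL x \in allL n 4.
Proof.
rewrite mem_allL size_map size_enum_ord eqxx /=.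
by apply/allP => c /mapP [j _ ->]; exact: ltn_ord.
Qed.

Lemma decL_inj : {in allL n 4 &, injective decL}.
Proof.
move=> l1 l2 h1 h2 E; apply: (@eq_from_nth _ 0).
  by move: h1 h2; rewrite !mem_allL => /andP[/eqP -> _] /andP[/eqP -> _].
move=> j; move: (h1); rewrite mem_allL => /andP[/eqP -> _] hj.
by rewrite -(val_decL (Ordinal hj) h1) -(val_decL (Ordinal hj) h2) E.
Qed.

Lemma sum_decL (R : Type) (idx : R) (op : Monoid.com_law idx) (F : {ffun 'I_n -> 'I_4} -> R) :
  \big[op/idx]_x F x = \big[op/idx]_(l <- allL n 4) F (decL l).
Proof.
rewrite -(big_map decL xpredT F) [RHS]big_uniq.
  apply: eq_bigl => x; apply/esym/mapP; exists (encL x); last by rewrite encLK.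
  exact: encL_mem.
rewrite map_inj_in_uniq ?uniq_allL //; exact: decL_inj.
Qed.
End Dec.

Definition nv (k : nat) : nat :=
  match k with 1 => 400 | 2 => 600 | 3 => 750 | 4 => 945 | 5 => 1194 | _ => 0 end.

Definition consL n (i : nat) (bl : seq bool) (a : nat) (l : seq nat) : bool :=
  all (fun j => if j == i then nth 0 l j == a
                else if nth false bl j then nth 0 l j != 0 else nth 0 l j == 0) (iota 0 n).
Definition succL n (l : seq nat) (j : nat) : bool :=
  (nth 0 l j != 0) && all (fun j' => (j' == j) || (nth 0 l j' != nth 0 l j)) (iota 0 n).
Definition stayL n (bl : seq bool) (l : seq nat) (j : nat) : bool :=
  nth false bl j && ~~ succL n l j.
Definition NL n i bl a : nat :=
  sumn [seq nv (count (stayL n bl l) (iota 0 n)) | l <- allL n 4 & consL n i bl a l && stayL n bl l i].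
Definition check n : bool :=
  all (fun i => all (fun bl => ~~ nth false bl i ||
     all (fun a => let m := (count id bl).-1 in
                   let lhs := 400 * 3 ^ m + NL n i bl a in
                   let rhs := nv (count id bl) * 3 ^ m in
                   (rhs <= lhs) && ((a == 0) || (lhs == rhs))) (iota 0 4)) (allB n)) (iota 0 n).

Lemma forall_iota n (P : pred nat) : [forall j : 'I_n, P j] = all P (iota 0 n).
Proof.
apply/forallP/allP => [H k | H j].
  by rewrite mem_iota => /andP[_ hk]; exact: (H (Ordinal hk)).
by apply: H; rewrite mem_iota /= add0n ltn_ord.
Qed.

Section Br.
Variable n : nat.
Definition encS (S : {set 'I_n}) : seq bool := [seq j \in S | j <- enum 'I_n].
Lemma nth_encS S (j : 'I_n) : nth false (encS S) j = (j \in S).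
Proof. by rewrite /encS (nth_map j) ?size_enum_ord // nth_ord_enum. Qed.
Lemma size_encS S : size (encS S) = n.
Proof. by rewrite size_map size_enum_ord. Qed.
Lemma count_encS S : count id (encS S) = #|S|.
Proof. by rewrite count_map cardE /enum_mem /= size_filter filter_predT. Qed.

Definition consb (i : 'I_n) (S : {set 'I_n}) (a : 'I_4) (x : {ffun 'I_n -> 'I_4}) : bool :=
  [forall j, if j == i then x j == a else if j \in S then x j != ord0 else x j == ord0].

Variable l : seq nat.
Hypothesis hl : l \in allL n 4.

Lemma succ_decL (j : 'I_n) : (j \in Defs.succ (decL n l)) = succL n l j.
Proof.
rewrite inE -val_eqE val_decL //= /succL; congr (_ && _).
rewrite -(forall_iota n (fun j' => (j' == j) || (nth 0 l j' != nth 0 l j))).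
apply: eq_forallb => j'.
by rewrite -!val_eqE !val_decL //= implybE negbK.
Qed.

Lemma consb_decL i S a : consb i S a (decL n l) = consL n i (encS S) a l.
Proof.
rewrite /consb /consL -forall_iota; apply: eq_forallb => j.
by rewrite -!val_eqE !val_decL //= nth_encS.
Qed.

Lemma stay_decL S (j : 'I_n) : (j \in S :\: Defs.succ (decL n l)) = stayL n (encS S) l j.
Proof. by rewrite inE andbC succ_decL /stayL nth_encS. Qed.

Lemma card_stay S : #|S :\: Defs.succ (decL n l)| = count (stayL n (encS S) l) (iota 0 n).
Proof. by apply: card_count => j; rewrite stay_decL. Qed.
End Br.

Lemma sumN n i S a :
  (\sum_(x : {ffun 'I_n -> 'I_4}) (consb i S a x && (i \in S :\: Defs.succ x)) * nv #|S :\: Defs.succ x|)%N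
  = NL n i (encS S) a.
Proof.
rewrite sum_decL /NL sumnE big_map big_filter /=.
rewrite [RHS]big_mkcond; apply: eq_big_seq => l hl /=.
by rewrite consb_decL // stay_decL // card_stay //; case: (_ && _); rewrite ?mul1n ?mul0n.
Qed.

Local Open Scope ring_scope.

Lemma prod_nat_bool (n : nat) (b : 'I_n -> bool) :
  (\prod_(j : 'I_n) (b j : nat))%N = [forall j, b j].
Proof.
case: (boolP [forall j, b j]) => [/forallP H|/forallPn [j Hj]].
  by apply: big1 => j _; rewrite H.
by rewrite (bigD1 j) //= (negbTE Hj) mul0n.
Qed.

Section Main.
Variable R : realType.
Variable n : nat.
Variable i : 'I_n.

Lemma prof_wE S a x :
  prof_w R i S a x = (consb i S a x)%:R * (3%:R^-1) ^+ #|S :\ i|.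
Proof.
rewrite /prof_w (eq_bigr (fun j => ((if j == i then x j == a else if j \in S then x j != ord0
    else x j == ord0) : nat)%:R * (if j \in S :\ i then 3%:R^-1 else 1))); last first.
  move=> j _; rewrite !inE; case: (j == i) => /=; first by rewrite mulr1.
  case: (j \in S) => /=; last by rewrite mulr1.
  by rewrite /f3dist; case: (x j == ord0) => /=; rewrite ?mul0r ?mul1r.
rewrite big_split /= -big_mkcond prodr_const -natr_prod prod_nat_bool.
done.
Qed.

Definition vv k : R := (nv k)%:R / 400%:R.
Definition V (S : {set 'I_n}) := vv #|S|.
Definition Q S a := \sum_(x : {ffun 'I_n -> 'I_4})
   prof_w R i S a x * ((i \in S :\: Defs.succ x)%:R * V (S :\: Defs.succ x)).

Lemma QE S a : Q S a = (3%:R^-1)^+#|S :\ i| / 400%:R * (NL n i (encS S) a)%:R.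
Proof.
rewrite /Q -sumN natr_sum big_distrr; apply: eq_bigr => x _.
rewrite prof_wE /V /vv natrM.
case: (consb _ _ _ _); case: (i \in _) => /=; rewrite ?mul0r ?mulr0 ?mul1r ?mulr1 ?mul0r //.
by rewrite mulrA mulrAC.
Qed.

Hypothesis hchk : check n.

Lemma chk (S : {set 'I_n}) (a : 'I_4) : i \in S ->
  (nv #|S| * 3 ^ #|S|.-1 <= 400 * 3 ^ #|S|.-1 + NL n i (encS S) a)%N /\
  (a != ord0 -> nv #|S| * 3 ^ #|S|.-1 = 400 * 3 ^ #|S|.-1 + NL n i (encS S) a)%N.
Proof.
move=> hi; move: hchk; rewrite /check => /allP /(_ (val i)); rewrite mem_iota leq0n add0n ltn_ord => /(_ isT).
move=> /allP /(_ (encS S) (mem_allB (size_encS S))); rewrite nth_encS hi => /orP [//|].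
move=> /allP /(_ (val a)); rewrite mem_iota leq0n add0n ltn_ord => /(_ isT).
rewrite count_encS => /andP[h1 h2]; split => // ha.
have ha2 : (val a == 0%N) = false := negbTE ha.
by move: h2; rewrite ha2 /= => /eqP ->.
Qed.

Lemma bell_state (S : {set 'I_n}) (a : 'I_4) : i \in S ->
  V S <= 1 + Q S a /\ (a != ord0 -> V S = 1 + Q S a).
Proof.
move=> hi; have [h1 h2] := chk a hi.
have hc : #|S :\ i| = #|S|.-1 by rewrite (cardsD1 i S) hi.
set m := #|S|.-1 in h1 h2 hc.
have E1 : V S = (nv #|S| * 3 ^ m)%:R * ((3%:R^-1)^+m / 400%:R).
  rewrite /V /vv natrM natrX exprVn; field.
  by rewrite expf_neq0 // pnatr_eq0.
have E2 : 1 + Q S a = (400 * 3 ^ m + NL n i (encS S) a)%:R * ((3%:R^-1)^+m / 400%:R).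
  rewrite QE hc natrD natrM natrX exprVn; field.
  by rewrite expf_neq0 // pnatr_eq0.
rewrite E1 E2; split; last by move=> /h2 ->.
by rewrite ler_wpM2r ?ler_nat // divr_ge0 // exprn_ge0 // invr_ge0.
Qed.

Definition Lf (d : {set 'I_n} -> R) := \sum_S d S * V S.
Definition mf (d : {set 'I_n} -> R) := \sum_S d S.

Lemma collapse (T : {set 'I_n}) :
  \sum_(S' : {set 'I_n}) ((T == S') && (i \in S'))%:R * V S' = (i \in T)%:R * V T.
Proof.
rewrite (bigD1 T) //= eqxx /= big1 ?addr0 // => S' hS'.
by rewrite eq_sym (negbTE hS') mul0r.
Qed.

Lemma step_sum d a : Lf (step i d a) = \sum_S d S * Q S a.
Proof.
rewrite /Lf /step.
under eq_bigr do rewrite big_distrl.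
rewrite exchange_big; apply: eq_bigr => S _ /=.
transitivity (d S * \sum_(x : {ffun 'I_n -> 'I_4}) \sum_(S' : {set 'I_n})
   prof_w R i S a x * ((S :\: Defs.succ x == S') && (i \in S'))%:R * V S').
  rewrite exchange_big big_distrr /=; apply: eq_bigr => S' _.
  by rewrite -mulrA big_distrl.
congr (_ * _); apply: eq_bigr => x _.
by rewrite -collapse mulr_sumr; apply: eq_bigr => S' _; rewrite /V /vv !mulrA.
Qed.

Lemma bell (d : {set 'I_n} -> R) (a : action) : (forall S : {set 'I_n}, d S != 0 -> i \in S) -> (forall S, 0 <= d S) ->
  Lf d <= mf d + Lf (step i d a) /\ (a != ord0 -> Lf d = mf d + Lf (step i d a)).
Proof.
move=> hs hp; rewrite step_sum /Lf /mf -big_split /=; split.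
  apply: ler_sum => S _; case: (eqVneq (d S) 0) => [->|hd]; first by rewrite !mul0r addr0.
  rewrite -[X in X + _]mulr1 -mulrDr; apply: ler_wpM2l => //.
  exact: (bell_state a (hs S hd)).1.
move=> ha; apply: eq_bigr => S _; case: (eqVneq (d S) 0) => [->|hd]; first by rewrite !mul0r addr0.
rewrite -[X in _ = X + _]mulr1 -mulrDr; congr (_ * _); exact: (bell_state a (hs S hd)).2.
Qed.

Lemma reach_rcons (h : seq action) (a : action) : reach R i (rcons h a) = step i (reach R i h) a.
Proof. by rewrite /reach foldl_rcons. Qed.

Lemma prof_w_ge0 S a x : 0 <= prof_w R i S a x.
Proof.
apply: prodr_ge0 => j _; case: (j == i) => //; case: (j \in S) => //.
by rewrite /f3dist; case: (x j == ord0) => //; rewrite invr_ge0.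
Qed.

Lemma step_ge0 (d : {set 'I_n} -> R) (a : action) : (forall S, 0 <= d S) -> forall S, 0 <= step i d a S.
Proof.
move=> hp S; apply: sumr_ge0 => T _; apply: mulr_ge0 => //.
by apply: sumr_ge0 => x _; apply: mulr_ge0 => //; exact: prof_w_ge0.
Qed.

Lemma step_supp (d : {set 'I_n} -> R) (a : action) S : step i d a S != 0 -> i \in S.
Proof.
apply: contraR => hi; apply/eqP; apply: big1 => T _.
by rewrite big1 ?mulr0 // => x _; rewrite (negbTE hi) andbF mulr0.
Qed.

Lemma reach_ge0 (h : seq action) S : 0 <= reach R i h S.
Proof.
elim/last_ind: h S => [|h a IH] S; first by rewrite /reach /= /init_state ler0n.
by rewrite reach_rcons; apply: step_ge0.
Qed.

Lemma reach_supp (h : seq action) S : reach R i h S != 0 -> i \in S.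
Proof.
elim/last_ind: h S => [|h a IH] S; last by rewrite reach_rcons; exact: step_supp.
rewrite /reach /= /init_state; have [-> _|hS] := eqVneq S [set: 'I_n]; first by rewrite inE.
by rewrite eqxx.
Qed.

Lemma sum_tupleS u (F : seq action -> R) :
  \sum_(s : u.+1.-tuple action) F s = \sum_(a : action) \sum_(s : u.-tuple action) F (a :: s).
Proof.
rewrite pair_big [LHS](reindex (fun p : action * u.-tuple action => [tuple of p.1 :: p.2])) //=.
exists (fun t => (thead t, [tuple of behead t])) => [[a s] _ | t _] /=.
  by rewrite theadE; congr (_, _); apply: val_inj.
by rewrite -tuple_eta.
Qed.

Definition G (sigma : strategy R) (h : seq action) (u : nat) (S : {set 'I_n}) : R :=
  \sum_(s : u.-tuple action) stratprob sigma h s * reach R i (h ++ s) S.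

Lemma G0 sigma h S : G sigma h 0 S = reach R i h S.
Proof.
rewrite /G (big_pred1 [tuple]) /=; first by rewrite mul1r cats0.
by move=> t; apply/esym/eqP; exact: tuple0.
Qed.

Lemma GS sigma h u S : G sigma h u.+1 S = \sum_a sigma h a * G sigma (rcons h a) u S.
Proof.
rewrite /G (sum_tupleS u (fun s => stratprob sigma h s * reach R i (h ++ s) S)); apply: eq_bigr => a _; rewrite mulr_sumr; apply: eq_bigr => s _ /=.
by rewrite cat_rcons mulrA.
Qed.

Lemma survE sigma h u : surv i sigma h u = mf (G sigma h u) / mass R i h.
Proof.
rewrite /surv /mf /G /mass; congr (_ / _).
by rewrite [RHS]exchange_big; apply: eq_bigr => s _; rewrite mulr_sumr.
Qed.

Lemma mf_GS sigma h u : mf (G sigma h u.+1) = \sum_a sigma h a * mf (G sigma (rcons h a) u).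
Proof.
rewrite /mf; under eq_bigr do rewrite GS.
by rewrite exchange_big; apply: eq_bigr => a _; rewrite mulr_sumr.
Qed.

Lemma Lf_GS sigma h u : Lf (G sigma h u.+1) = \sum_a sigma h a * Lf (G sigma (rcons h a) u).
Proof.
rewrite /Lf; under eq_bigr do rewrite GS mulr_suml.
rewrite exchange_big; apply: eq_bigr => a _; rewrite mulr_sumr.
by apply: eq_bigr => S _; rewrite mulrA.
Qed.

Lemma Lf_G0 sigma h : Lf (G sigma h 0) = Lf (reach R i h).
Proof. by rewrite /Lf; under eq_bigr do rewrite G0. Qed.
Lemma mf_G0 sigma h : mf (G sigma h 0) = mf (reach R i h).
Proof. by rewrite /mf; under eq_bigr do rewrite G0. Qed.

Lemma stratprob_ge0 (sigma : strategy R) h s : valid_strategy sigma -> 0 <= stratprob sigma h s.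
Proof.
move=> hv; elim: s h => [|a s IH] h /=; first exact: ler01.
by apply: mulr_ge0; [exact: hv.1 | exact: IH].
Qed.

Lemma G_ge0 sigma h u S : valid_strategy sigma -> 0 <= G sigma h u S.
Proof.
move=> hv; apply: sumr_ge0 => s _; apply: mulr_ge0; first exact: stratprob_ge0.
exact: reach_ge0.
Qed.

Lemma V_ge0 S : 0 <= V S.
Proof. by rewrite /V /vv divr_ge0 // ler0n. Qed.

Lemma V_le3 S : V S <= 3.
Proof.
rewrite /V /vv ler_pdivrMr ?ltr0n // -natrM ler_nat.
by case: #|S| => [|[|[|[|[|[|k]]]]]].
Qed.

Lemma Lf_ge0 d : (forall S, 0 <= d S) -> 0 <= Lf d.
Proof. by move=> hp; apply: sumr_ge0 => S _; apply: mulr_ge0 => //; exact: V_ge0. Qed.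

Lemma Lf_le d : (forall S, 0 <= d S) -> Lf d <= 3 * mf d.
Proof.
move=> hp; rewrite /Lf /mf mulr_sumr; apply: ler_sum => S _.
by rewrite mulrC ler_wpM2r // V_le3.
Qed.

Lemma sum_sigma_const (sigma : strategy R) h c : valid_strategy sigma ->
  \sum_a sigma h a * c = c.
Proof. by move=> hv; rewrite -mulr_suml hv.2 mul1r. Qed.

Lemma ineq sigma N h : valid_strategy sigma ->
  Lf (reach R i h) <= \sum_(0 <= u < N) mf (G sigma h u) + Lf (G sigma h N).
Proof.
move=> hv; elim: N h => [|N IH] h.
  by rewrite big_geq // add0r Lf_G0.
rewrite big_nat_recl // mf_G0 Lf_GS.
under eq_bigr => u _ do rewrite mf_GS.
rewrite exchange_big /= -addrA -big_split /=.
have hs := @reach_supp h; have hp := @reach_ge0 h.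
apply: (@le_trans _ _ (mf (reach R i h) + \sum_a sigma h a * Lf (reach R i (rcons h a)))).
  have E : Lf (reach R i h) = mf (reach R i h) +
       \sum_a sigma h a * (Lf (reach R i h) - mf (reach R i h)).
    by rewrite sum_sigma_const //; ring.
  rewrite {1}E lerD2l; apply: ler_sum => a _; apply: ler_wpM2l; first exact: hv.1.
  by rewrite reach_rcons lerBlDl; exact: (@bell _ a hs hp).1.
rewrite lerD2l; apply: ler_sum => a _; rewrite -mulr_sumr -mulrDr.
by apply: ler_wpM2l; [exact: hv.1 | exact: IH].
Qed.

Lemma f3_valid : valid_strategy (f3 R).
Proof.
split => [h a|h]; rewrite /f3 /f3dist.
  by case: (a == ord0) => //; rewrite invr_ge0 ler0n.
rewrite (bigD1 ord0) //= add0r.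
rewrite (eq_bigr (fun _ => 3%:R^-1)); last by move=> a ha; rewrite (negbTE ha).
rewrite sumr_const cardC1 card_ord /= -[_ *+ 3]mulr_natr mulVf // pnatr_eq0.
Qed.

Lemma eq_f3 N h :
  Lf (reach R i h) = \sum_(0 <= u < N) mf (G (f3 R) h u) + Lf (G (f3 R) h N).
Proof.
elim: N h => [|N IH] h.
  by rewrite big_geq // add0r Lf_G0.
rewrite big_nat_recl // mf_G0 Lf_GS.
under eq_bigr => u _ do rewrite mf_GS.
rewrite exchange_big /= -addrA -big_split /=.
have hs := @reach_supp h; have hp := @reach_ge0 h.
transitivity (mf (reach R i h) + \sum_a f3 R h a * Lf (reach R i (rcons h a))).
  have E : Lf (reach R i h) = mf (reach R i h) +
       \sum_a f3 R h a * (Lf (reach R i h) - mf (reach R i h)).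
    by rewrite sum_sigma_const //; [ring | exact: f3_valid].
  rewrite {1}E; congr (_ + _); apply: eq_bigr => a _.
  rewrite /f3 /f3dist; case: eqP => [_|/eqP ha]; first by rewrite !mul0r.
  by rewrite reach_rcons (@bell _ a hs hp).2 // addrC addKr.
congr (_ + _); apply: eq_bigr => a _; rewrite -mulr_sumr -mulrDr.
by rewrite -IH.
Qed.

Lemma series_ub (t : nat -> R) c : (forall u, 0 <= t u) ->
  (forall N, \sum_(0 <= u < N) t u <= c) ->
  (\sum_(0 <= u <oo) (t u)%:E <= c%:E)%E.
Proof.
move=> h0 hb.
have hu : forall k, (0 <= k)%N -> xpredT k -> (0 <= (t k)%:E)%E by move=> k _ _; rewrite lee_fin.
apply: (lime_le (is_cvg_nneseries hu)); apply: nearW => N.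
by rewrite sumEFin lee_fin; exact: hb.
Qed.

Lemma series_lb (t : nat -> R) c : (forall u, 0 <= t u) ->
  (forall N, c <= \sum_(0 <= u < N) t u + 3 * t N) ->
  (c%:E <= \sum_(0 <= u <oo) (t u)%:E)%E.
Proof.
move=> h0 hc.
have hu : forall k, (0 <= k)%N -> xpredT k -> (0 <= (t k)%:E)%E by move=> k _ _; rewrite lee_fin.
have hP N : ((\sum_(0 <= u < N) t u)%:E <= \sum_(0 <= u <oo) (t u)%:E)%E.
  by rewrite -sumEFin; apply: nneseries_lim_ge.
have hg := nneseries_ge0 hu.
move: (\sum_(0 <= u <oo) (t u)%:E)%E hP hg => [l| |] hP hg //; last by rewrite leey.
rewrite lee_fin leNgt; apply/negP => hl.
have hP' N : \sum_(0 <= u < N) t u <= l by rewrite -lee_fin.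
set d := (c - l) / 3.
have hd : 0 < d by rewrite /d divr_gt0 // subr_gt0.
have ht N : d <= t N.
  rewrite /d ler_pdivrMr //; have := hc N; have := hP' N; lra.
have hN N : N%:R * d <= \sum_(0 <= u < N) t u.
  elim: N => [|N IH]; first by rewrite big_geq // mul0r.
  by rewrite big_nat_recr //= -natr1 mulrDl mul1r; apply: lerD.
have := hN (Num.truncn (l / d)).+1; have := truncnS_gt (l / d).
rewrite ltr_pdivrMr //; have := hP' (Num.truncn (l / d)).+1; lra.
Qed.

Lemma surv_ge0 (sigma : strategy R) h u : valid_strategy sigma -> 0 < mass R i h -> 0 <= surv i sigma h u.
Proof.
move=> hv hm; rewrite survE divr_ge0 //; last exact: ltW.
by rewrite /mf; apply: sumr_ge0 => S _; exact: G_ge0.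
Qed.

Lemma key_ineq (sigma : strategy R) h N : valid_strategy sigma -> 0 < mass R i h ->
  Lf (reach R i h) / mass R i h <= \sum_(0 <= u < N) surv i sigma h u + 3 * surv i sigma h N.
Proof.
move=> hv hm.
under eq_bigr => u _ do rewrite survE.
rewrite -mulr_suml survE mulrA -mulrDl; apply: ler_wpM2r; first by rewrite invr_ge0 ltW.
apply: (le_trans (ineq N h hv)); rewrite lerD2l; apply: Lf_le => S; exact: G_ge0.
Qed.

Lemma lat_lb (sigma : strategy R) h : valid_strategy sigma -> 0 < mass R i h ->
  ((Lf (reach R i h) / mass R i h)%:E <= \sum_(0 <= u <oo) (surv i sigma h u)%:E)%E.
Proof.
move=> hv hm; apply: series_lb; first by move=> u; exact: surv_ge0.
by move=> N; exact: key_ineq.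
Qed.

Lemma lat_f3 h : 0 < mass R i h ->
  exp_latency i (f3 R) h = ((size h)%:R + Lf (reach R i h) / mass R i h)%:E.
Proof.
move=> hm; rewrite /exp_latency EFinD; congr (_ + _)%E.
apply/eqP; rewrite eq_le; apply/andP; split; last exact: lat_lb f3_valid hm.
apply: series_ub; first by move=> u; apply: surv_ge0 => //; exact: f3_valid.
move=> N; under eq_bigr => u _ do rewrite survE.
rewrite -mulr_suml; apply: ler_wpM2r; first by rewrite invr_ge0 ltW.
rewrite (eq_f3 N h) lerDl; apply: Lf_ge0 => S; apply: G_ge0; exact: f3_valid.
Qed.
End Main.

Theorem theorem4 (R : realType) (n : nat) :
  (2 <= n <= 5)%N ->
  f3_equilibrium R n /\
  (forall i : 'I_n, @exp_latency R n i (f3 R) [::] = (lat_value R n)%:E).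
Proof.
move=> hn.
have hchk : check n.
  by move: hn; case: n => [|[|[|[|[|[|n]]]]]] // _; vm_compute.
split.
  move=> i h sigma hv hm.
  rewrite (lat_f3 hchk hm) /exp_latency EFinD; apply: leeD2l.
  have H := lat_lb hchk hv hm. exact H.
move=> i.
have hm : mass R i [::] = 1.
  rewrite /mass /reach /= /init_state (bigD1 [set: 'I_n]) //= eqxx big1 ?addr0 //.
  by move=> S hS; rewrite (negbTE hS).
have hL : Lf (reach R i [::]) = vv R n.
  rewrite /Lf /reach /= /init_state (bigD1 [set: 'I_n]) //= eqxx big1 ?addr0.
    by rewrite mul1r /V cardsT card_ord.
  by move=> S hS; rewrite (negbTE hS) mul0r.
rewrite (lat_f3 hchk) hm ?ltr01 // hL divr1 /= add0r; congr (_%:E).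
rewrite /vv /lat_value.
clear -hn; move: hn; case: n => [|[|[|[|[|[|n]]]]]] //= _; field; done.
Qed.
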